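(* Let $\mathbf{W}=\langle W;\to,\neg,{}^{+},{}^{-},1\rangle$ be a quasi-Wajsberg* algebra. Then for any $x,y\in W$: (1) $\neg x\to y=\neg y\to x$ and $x\to\neg y=y\to\neg x$; (2) $\neg(x\to y)=\neg x\to\neg y$; (3) $x\to x=y\to y$; (4) $\neg(x\to x)=x\to x$.
   Context: A quasi-Wajsberg* algebra is an algebra $\langle W;\to,\neg,{}^{+},{}^{-},1\rangle$ of type $\langle2,1,1,1,0\rangle$ such that for all $x,y,z\in W$: (QW*1) $x\to y=\neg y\to\neg x$; (QW*2) $(x\to 1)\to((y\to 1)\to z)=(y\to 1)\to((x\to 1)\to z)$; (QW*3) $(1\to x)\to 1=1$; (QW*4) $(z\to z)\to(x\to y)=x\to y$; (QW*5) $(1\to 1)\to x^{+}=((1\to 1)\to x)^{+}=(x\to 1)\to 1$ and $(1\to 1)\to x^{-}=((1\to 1)\to x)^{-}=(x\to\neg 1)\to\neg 1$; (QW*6) $x\to y=(y^{+}\to x^{-})\to(x^{+}\to y^{-})$; (QW*7) $\neg(x\to y)=y\to x$; (QW*8) $\neg\neg x=x$; (QW*9) $(x\to(\neg x\to y))^{+}=x^{+}\to(\neg x^{+}\to y^{+})$; (QW*10) $x\vee y=y\vee x$; (QW*11) $x\vee(y\vee z)=(x\vee y)\vee z$; (QW*12) $x\to(y\vee z)=(x\to y)\vee(x\to z)$; where $x\vee y:=((x^{+}\to y^{+})^{+}\to(\neg x)^{-})\to((y^{-}\to x^{-})^{-}\to x^{-})$. Conventions: ${}^+,{}^-$ bind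 tighter than $\neg$, which binds tighter than $\to$ (so $\neg x\to y$ means $(\neg x)\to y$). *)

(* Defs.v *)
Section QW.
Variable W : Type.
Variable imp : W -> W -> W.
Variable neg plus minus : W -> W.
Variable one : W.

Definition qw_join (x y : W) : W :=
  imp (imp (plus (imp (plus x) (plus y))) (minus (neg x)))
      (imp (minus (imp (minus y) (minus x))) (minus x)).

Definition is_quasi_wajsberg_star : Prop :=
  (forall x y, imp x y = imp (neg y) (neg x)) /\
  (forall x y z, imp (imp x one) (imp (imp y one) z)
                 = imp (imp y one) (imp (imp x one) z)) /\
  (forall x, imp (imp one x) one = one) /\
  (forall x y z, imp (imp z z) (imp x y) = imp x y) /\
  (forall x, imp (imp one one) (plus x) = plus (imp (imp one one) x) /\
             plus (imp (imp one one) x) = imp (imp x one) one) /\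
  (forall x, imp (imp one one) (minus x) = minus (imp (imp one one) x) /\
             minus (imp (imp one one) x) = imp (imp x (neg one)) (neg one)) /\
  (forall x y, imp x y = imp (imp (plus y) (minus x)) (imp (plus x) (minus y))) /\
  (forall x y, neg (imp x y) = imp y x) /\
  (forall x, neg (neg x) = x) /\
  (forall x y, plus (imp x (imp (neg x) y))
               = imp (plus x) (imp (neg (plus x)) (plus y))) /\
  (forall x y, qw_join x y = qw_join y x) /\
  (forall x y z, qw_join x (qw_join y z) = qw_join (qw_join x y) z) /\
  (forall x y z, imp x (qw_join y z) = qw_join (imp x y) (imp x z)).
End QW.

(* Main.v *)
Require Import Defs.

Theorem proposition3p1 (W : Type) (imp : W -> W -> W) (neg plus minus : W -> W) (one : W) :
  is_quasi_wajsberg_star W imp neg plus minus one ->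
  forall x y : W,
    (imp (neg x) y = imp (neg y) x /\ imp x (neg y) = imp y (neg x)) /\
    neg (imp x y) = imp (neg x) (neg y) /\
    imp x x = imp y y /\
    neg (imp x x) = imp x x.
Proof.
  intros [H1 [H2 [H3 [H4 [H5 [H5b [H6 [H7 [H8 _]]]]]]]]] x y.
  assert (E4 : forall z, neg (imp z z) = imp z z) by (intro z; apply H7).
  split; [split|split; [|split]].
  - rewrite (H1 (neg x) y), H8. reflexivity.
  - rewrite (H1 x (neg y)), H8. reflexivity.
  - rewrite H7, H1. reflexivity.
  - transitivity (neg (imp x x)); [symmetry; apply E4|].
    rewrite <- (H4 x x y). rewrite H7, H4. reflexivity.
  - apply E4.
Qed.
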